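(* Let $q\in\mathbb{N}$ be odd and square-free. Then if $Q$ is an integral ternary quadratic form with $\gcd(\det(Q),q)=1$ we have \[m(Q;q)\ll q^{1/2}\,\widehat{m}(-Q^{\mathrm{adj}};q)^{1/2},\] with an absolute implied constant. In particular one has \[B_3^*(q)\ll q^{1/2}\,\widehat{B}_3(q)^{1/2}.\]
   Context: $\|\cdot\|$ is the Euclidean norm. Since $q$ is odd, an integral quadratic form $Q$ in $n$ variables is represented modulo $q$ by a symmetric integer matrix $M$ (so $Q(\mathbf{x})\equiv\mathbf{x}^TM\mathbf{x}\pmod q$); $\det(Q)$ means $\det(M)$, and $Q^{\mathrm{adj}}$ denotes the quadratic form with matrix the adjugate matrix of $M$, so $-Q^{\mathrm{adj}}$ is the form $\mathbf{y}\mapsto-\mathbf{y}^T\mathrm{adj}(M)\mathbf{y}$. Define $m(Q;q):=\min\{\|\mathbf{x}\|:\ \mathbf{x}\in\mathbb{Z}^n\setminus\{\mathbf{0}\},\ Q(\mathbf{x})\equiv0\pmod q\}$ and $\widehat{m}(Q;q):=\min\{\|\mathbf{x}\|:\ \mathbf{x}\in\mathbb{Z}^n\setminus\{\mathbf{0}\},\ \exists t\in\mathbb{Z},\ Q(\mathbf{x})\equiv t^2\pmod q\}$. Define $B_3^*(q):=\max_Q m(Q;q)$ over integral ternary forms $Q$ with $\gcd(\det(Q),q)=1$, and $\widehat{B}_n(q):=\max_Q\widehat{m}(Q;q)$ over integral quadratic forms $Q$ in $n$ variables with $\gcd(\det(Q),q)=1$. *)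

(* Defs.v *)
From HB Require Import structures.
From mathcomp Require Import all_boot all_order all_algebra.
From mathcomp Require Import all_classical all_reals.
Set Implicit Arguments. Unset Strict Implicit. Unset Printing Implicit Defensive.
Import Order.TTheory GRing.Theory Num.Theory.
Local Open Scope classical_set_scope.
Local Open Scope ring_scope.

Definition squarefree (q : nat) : Prop :=
  forall p : nat, prime p -> ~~ (p * p %| q)%N.

Definition qform (M : 'M[int]_3) (x : 'cV[int]_3) : int := (x^T *m M *m x) 0 0.

Definition sqnorm (x : 'cV[int]_3) : int := \sum_(i < 3) (x i 0) ^+ 2.

Definition enorm (R : realType) (x : 'cV[int]_3) : R := Num.sqrt ((sqnorm x)%:~R).

Definition mQ (R : realType) (M : 'M[int]_3) (q : nat) : R :=
  inf [set enorm R x | x in [set x : 'cV[int]_3 | x != 0 /\ (q%:Z %| qform M x)%Z]].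

Definition mhatQ (R : realType) (M : 'M[int]_3) (q : nat) : R :=
  inf [set enorm R x | x in [set x : 'cV[int]_3 |
         x != 0 /\ exists t : int, (q%:Z %| qform M x - t ^+ 2)%Z]].

Definition admissible (M : 'M[int]_3) (q : nat) : Prop :=
  M^T = M /\ coprime `|\det M|%N q.

Definition B3star (R : realType) (q : nat) : R :=
  sup [set mQ R M q | M in [set M : 'M[int]_3 | admissible M q]].

Definition B3hat (R : realType) (q : nat) : R :=
  sup [set mhatQ R M q | M in [set M : 'M[int]_3 | admissible M q]].

(* Main.v *)
Require Import Defs.
From HB Require Import structures.
From mathcomp Require Import all_boot all_order all_algebra.
From mathcomp Require Import all_classical all_reals.
From mathcomp Require Import ring zify lra.
Import Order.TTheory GRing.Theory Num.Theory.
Lemma prime_in_prod (p : nat) (ps : seq nat) : prime p -> all prime ps ->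
  (p %| \prod_(r <- ps) r)%N -> p \in ps.
Proof.
move=> pp; elim: ps => [|r ps IH] /=; first by rewrite big_nil dvdn1 => _ /eqP p1; move: pp; rewrite p1.
case/andP=> pr aps; rewrite big_cons Euclid_dvdM // => /orP [h|h].
  by rewrite in_cons; apply/orP; left; rewrite -(dvdn_prime2 pp pr).
by rewrite in_cons (IH aps h) orbT.
Qed.

Lemma prod_primes_dvd (ps : seq nat) (n : nat) : uniq ps ->
  (forall p, p \in ps -> prime p /\ (p %| n)%N) -> (\prod_(p <- ps) p %| n)%N.
Proof.
elim: ps => [|r ps IH] /=; first by rewrite big_nil dvd1n.
case/andP=> nr ups H; rewrite big_cons Gauss_dvd.
  have [pr rn] := H r (mem_head _ _).
  by rewrite rn IH // => p hp; apply: H; rewrite in_cons hp orbT.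
have [pr _] := H r (mem_head _ _).
rewrite prime_coprime //; apply/negP => /prime_in_prod h.
have : r \in ps.
  apply: h => //; apply/allP => p hp; have [] := H p; [by rewrite in_cons hp orbT|done].
by rewrite (negbTE nr).
Qed.

Lemma squarefree_prod (q : nat) : (0 < q)%N ->
  (forall p : nat, prime p -> ~~ (p * p %| q)%N) -> \prod_(p <- primes q) p = q.
Proof.
move=> q0 sf; rewrite {2}(prod_prime_decomp q0) prime_decompE big_map /=.
apply: eq_big_seq => p; rewrite mem_primes => /and3P [pp _ pq].
have l1 : (0 < logn p q)%N by rewrite logn_gt0 mem_primes pp q0.
have l2 : (logn p q <= 1)%N.
  rewrite leqNgt; apply/negP => h; move: (sf p pp).
  by rewrite mulnn pfactor_dvdn // h.
have -> : logn p q = 1%N by apply/eqP; rewrite eqn_leq l2.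
by rewrite expn1.
Qed.
Local Open Scope ring_scope.
Definition e3 (M : 'M[int]_3) (i j : nat) := M (inord i) (inord j).
Lemma e3E (M : 'M[int]_3) a b : M a b = e3 M a b.
Proof. by rewrite /e3 !inord_val. Qed.
Definition Qp (M : 'M[int]_3) (a0 a1 a2 : int) :=
  a0 * e3 M 0 0 * a0 + a0 * e3 M 0 1 * a1 + a0 * e3 M 0 2 * a2 +
  a1 * e3 M 1 0 * a0 + a1 * e3 M 1 1 * a1 + a1 * e3 M 1 2 * a2 +
  a2 * e3 M 2 0 * a0 + a2 * e3 M 2 1 * a1 + a2 * e3 M 2 2 * a2.
Definition Bp (M : 'M[int]_3) (a0 a1 a2 b0 b1 b2 : int) :=
  a0 * e3 M 0 0 * b0 + a0 * e3 M 0 1 * b1 + a0 * e3 M 0 2 * b2 +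
  a1 * e3 M 1 0 * b0 + a1 * e3 M 1 1 * b1 + a1 * e3 M 1 2 * b2 +
  a2 * e3 M 2 0 * b0 + a2 * e3 M 2 1 * b1 + a2 * e3 M 2 2 * b2.
Definition bb (h k : nat) : nat := if (h <= k)%N then k.+1 else k.
Lemma adj3 (M : 'M[int]_3) i j : (i < 3)%N -> (j < 3)%N -> e3 (\adj M) i j =
  (-1) ^+ (Nat.add j i) * (e3 M (bb j 0) (bb i 0) * e3 M (bb j 1) (bb i 1)
   - e3 M (bb j 0) (bb i 1) * e3 M (bb j 1) (bb i 0)).
Proof.
move=> hi hj; rewrite /e3 !mxE /cofactor.
rewrite (expand_det_row _ ord0) !big_ord_recl big_ord0 /cofactor.
rewrite !det_mx11 !mxE !e3E /= !inordK //.
case: i hi => [|[|[|//]]] _; case: j hj => [|[|[|//]]] _ /=; rewrite /bump /bb /addn /addn_rec /=; ring.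
all: try by case: i hi => [|[|[|//]]] _; case: j hj => [|[|[|//]]] _.
Qed.
Lemma e3sym (M : 'M[int]_3) i j : M^T = M -> e3 M i j = e3 M j i.
Proof. by move=> hM; rewrite /e3 -{1}hM mxE. Qed.
Ltac symM M hM := rewrite ?(e3sym M 1 0 hM) ?(e3sym M 2 0 hM) ?(e3sym M 2 1 hM).
Lemma I2_2 (M : 'M[int]_3) y0 y1 y2 : M^T = M ->
  Qp M y2 0 (-y0) * Qp M 0 y2 (-y1) - (Bp M y2 0 (-y0) 0 y2 (-y1))^+2
  = y2^+2 * Qp (\adj M) y0 y1 y2.
Proof.
move=> hM; rewrite /Qp /Bp !adj3 //= /bb /=. symM M hM. ring.
Qed.
Lemma I2_1 (M : 'M[int]_3) y0 y1 y2 : M^T = M ->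
  Qp M y1 (-y0) 0 * Qp M 0 (-y2) y1 - (Bp M y1 (-y0) 0 0 (-y2) y1)^+2
  = y1^+2 * Qp (\adj M) y0 y1 y2.
Proof.
move=> hM; rewrite /Qp /Bp !adj3 //= /bb /=. symM M hM. ring.
Qed.
Lemma I2_0 (M : 'M[int]_3) y0 y1 y2 : M^T = M ->
  Qp M (-y1) y0 0 * Qp M (-y2) 0 y0 - (Bp M (-y1) y0 0 (-y2) 0 y0)^+2
  = y0^+2 * Qp (\adj M) y0 y1 y2.
Proof.
move=> hM; rewrite /Qp /Bp !adj3 //= /bb /=. symM M hM. ring.
Qed.
Lemma I1_2 (M : 'M[int]_3) y0 y1 y2 x0 x1 x2 : M^T = M ->
  y2^+2 * Qp M x0 x1 x2 - (Qp M y2 0 (-y0) * x0^+2 + 2 * Bp M y2 0 (-y0) 0 y2 (-y1) * x0 * x1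
     + Qp M 0 y2 (-y1) * x1^+2)
  = (y0*x0+y1*x1+y2*x2) * (Bp M (y2*x0) (y2*x1) (-y0*x0-y1*x1) 0 0 1 + Bp M 0 0 1 (y2*x0) (y2*x1) (-y0*x0-y1*x1) + (y0*x0+y1*x1+y2*x2) * e3 M 2 2).
Proof. move=> hM; rewrite /Qp /Bp. symM M hM. ring. Qed.
Lemma I1_1 (M : 'M[int]_3) y0 y1 y2 x0 x1 x2 : M^T = M ->
  y1^+2 * Qp M x0 x1 x2 - (Qp M y1 (-y0) 0 * x0^+2 + 2 * Bp M y1 (-y0) 0 0 (-y2) y1 * x0 * x2
     + Qp M 0 (-y2) y1 * x2^+2)
  = (y0*x0+y1*x1+y2*x2) * (Bp M (y1*x0) (-y0*x0-y2*x2) (y1*x2) 0 1 0 + Bp M 0 1 0 (y1*x0) (-y0*x0-y2*x2) (y1*x2) + (y0*x0+y1*x1+y2*x2) * e3 M 1 1).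
Proof. move=> hM; rewrite /Qp /Bp. symM M hM. ring. Qed.
Lemma I1_0 (M : 'M[int]_3) y0 y1 y2 x0 x1 x2 : M^T = M ->
  y0^+2 * Qp M x0 x1 x2 - (Qp M (-y1) y0 0 * x1^+2 + 2 * Bp M (-y1) y0 0 (-y2) 0 y0 * x1 * x2
     + Qp M (-y2) 0 y0 * x2^+2)
  = (y0*x0+y1*x1+y2*x2) * (Bp M (-y1*x1-y2*x2) (y0*x1) (y0*x2) 1 0 0 + Bp M 1 0 0 (-y1*x1-y2*x2) (y0*x1) (y0*x2) + (y0*x0+y1*x1+y2*x2) * e3 M 0 0).
Proof. move=> hM; rewrite /Qp /Bp. symM M hM. ring. Qed.

Lemma EuclidZ (p : nat) (a b : int) : prime p ->
  (p%:Z %| a * b)%Z = (p%:Z %| a)%Z || (p%:Z %| b)%Z.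
Proof. by move=> pp; rewrite !dvdzE abszM Euclid_dvdM. Qed.

Lemma dvdZ_sub_eq (p : int) a b : (p %| a - b)%Z -> (p %| b)%Z -> (p %| a)%Z.
Proof. move=> h1 h2; have -> : a = (a - b) + b by ring. by rewrite rpredD. Qed.

Lemma coreG p (al be ga c d A t : int) : prime p -> ~~ (p%:Z %| c)%Z -> ~~ (p%:Z %| d)%Z ->
  al*ga - be^+2 = c^+2 * A -> (p%:Z %| d^+2 * A + t^+2)%Z ->
  exists l1 l2 : int, forall a b Qx : int,
   (p%:Z %| c^+2 * Qx - (al*a^+2 + 2*be*a*b + ga*b^+2))%Z ->
   (p%:Z %| l1*a + l2*b)%Z -> (p%:Z %| Qx)%Z.
Proof.
move=> pp pc pd hid hA.
have fin : forall a b Qx : int, (p%:Z %| c^+2 * Qx - (al*a^+2 + 2*be*a*b + ga*b^+2))%Z ->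
   (p%:Z %| al*a^+2 + 2*be*a*b + ga*b^+2)%Z -> (p%:Z %| Qx)%Z.
  move=> a b Qx h1 h2; have := dvdZ_sub_eq _ _ _ h1 h2.
  by rewrite expr2 !EuclidZ // (negbTE pc).
have [pal|npal] := boolP (p%:Z %| al)%Z.
  exists 0, 1 => a b Qx h1 h2; apply: (fin a b Qx h1).
  rewrite mul0r add0r mul1r in h2.
  have -> : al*a^+2 + 2*be*a*b + ga*b^+2 = al * a^+2 + b * (2*be*a + ga*b) by ring.
  by apply: rpredD; apply: dvdz_mulr.
exists (d*al), (d*be - c*t) => a b Qx h1 h2; apply: (fin a b Qx h1).
set F := al*a^+2 + 2*be*a*b + ga*b^+2.
set l := d * al * a + (d * be - c * t) * b.
have e : d^+2 * al * F = l * (l + 2*c*t*b) + c^+2*b^+2*(d^+2*A+t^+2)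
   + d^+2*b^+2*(al*ga - be^+2 - c^+2*A) by rewrite /F /l; ring.
rewrite hid subrr mulr0 addr0 in e.
have : (p%:Z %| d^+2 * al * F)%Z.
  by rewrite e; apply: rpredD; [apply: dvdz_mulr | apply: dvdz_mull].
by rewrite expr2 !EuclidZ // (negbTE pd) (negbTE npal).
Qed.
Definition dot3 (l : int * int * int) (x0 x1 x2 : int) := l.1.1 * x0 + l.1.2 * x1 + l.2 * x2.

Lemma Qp_dvd (M : 'M[int]_3) (p : int) x0 x1 x2 :
  (p %| x0)%Z -> (p %| x1)%Z -> (p %| x2)%Z -> (p %| Qp M x0 x1 x2)%Z.
Proof.
by move=> h0 h1 h2; rewrite /Qp; repeat apply: rpredD; apply: dvdz_mulr; apply: dvdz_mulr.
Qed.

Lemma perprime (M : 'M[int]_3) (p : nat) (y0 y1 y2 g t : int) :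
  prime p -> M^T = M -> ~~ [&& (p%:Z %| y0)%Z, (p%:Z %| y1)%Z & (p%:Z %| y2)%Z] ->
  (p%:Z %| g^+2 * Qp (\adj M) y0 y1 y2 + t^+2)%Z ->
  exists l1 l2 : int * int * int, forall x0 x1 x2 : int,
    (p%:Z %| y0*x0 + y1*x1 + y2*x2)%Z -> (p%:Z %| dot3 l1 x0 x1 x2)%Z ->
    ((if (p%:Z %| g)%Z then p%:Z else 1) %| dot3 l2 x0 x1 x2)%Z ->
    (p%:Z %| Qp M x0 x1 x2)%Z.
Proof.
move=> pp hM hy hA.
have [pg|npg] := boolP (p%:Z %| g)%Z.
  case/nandP: hy => [h0|/nandP [h1|h2]].
  - exists (0,1,0), (0,0,1) => x0 x1 x2 hs; rewrite /dot3 /= !mul0r !mul1r ?add0r ?addr0 => hx1 hx2.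
    apply: Qp_dvd => //.
    have : (p%:Z %| y0 * x0)%Z.
      have -> : y0 * x0 = (y0*x0 + y1*x1 + y2*x2) - (y1 * x1 + y2 * x2) by ring.
      by rewrite rpredB // rpredD // dvdz_mull.
    by rewrite EuclidZ // (negbTE h0).
  - exists (1,0,0), (0,0,1) => x0 x1 x2 hs; rewrite /dot3 /= !mul0r !mul1r ?add0r ?addr0 => hx0 hx2.
    apply: Qp_dvd => //.
    have : (p%:Z %| y1 * x1)%Z.
      have -> : y1 * x1 = (y0*x0 + y1*x1 + y2*x2) - (y0 * x0 + y2 * x2) by ring.
      by rewrite rpredB // rpredD // dvdz_mull.
    by rewrite EuclidZ // (negbTE h1).
  - exists (1,0,0), (0,1,0) => x0 x1 x2 hs; rewrite /dot3 /= !mul0r !mul1r ?add0r ?addr0 => hx0 hx1.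
    apply: Qp_dvd => //.
    have : (p%:Z %| y2 * x2)%Z.
      have -> : y2 * x2 = (y0*x0 + y1*x1 + y2*x2) - (y0 * x0 + y1 * x1) by ring.
      by rewrite rpredB // rpredD // dvdz_mull.
    by rewrite EuclidZ // (negbTE h2).
case/nandP: hy => [h0|/nandP [h1|h2]].
- have [l1 [l2 H]] := coreG _ _ _ _ _ _ _ _ pp h0 npg (I2_0 _ y0 y1 y2 hM) hA.
  exists (0, l1, l2), (0,0,0) => x0 x1 x2 hs hl _.
  apply: (H x1 x2) => //; last by move: hl; rewrite /dot3 /= mul0r add0r.
  by rewrite (I1_0 _ _ _ _ x0 x1 x2 hM) dvdz_mulr.
- have [l1 [l2 H]] := coreG _ _ _ _ _ _ _ _ pp h1 npg (I2_1 _ y0 y1 y2 hM) hA.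
  exists (l1, 0, l2), (0,0,0) => x0 x1 x2 hs hl _.
  apply: (H x0 x2) => //; last by move: hl; rewrite /dot3 /= mul0r addr0.
  by rewrite (I1_1 _ _ _ _ x0 x1 x2 hM) dvdz_mulr.
- have [l1 [l2 H]] := coreG _ _ _ _ _ _ _ _ pp h2 npg (I2_2 _ y0 y1 y2 hM) hA.
  exists (l1, l2, 0), (0,0,0) => x0 x1 x2 hs hl _.
  apply: (H x0 x1) => //; last by move: hl; rewrite /dot3 /= mul0r addr0.
  by rewrite (I1_2 _ _ _ _ x0 x1 x2 hM) dvdz_mulr.
Qed.
Definition Zr (n : nat) : seq int := [seq k%:Z | k <- iota 0 n].
Lemma mem_Zr (n : nat) (z : int) : (0 < n)%N -> (z %% n%:Z)%Z \in Zr n.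
Proof.
move=> n0; have nz : n%:Z != 0 by rewrite eqz_nat -lt0n.
have h0 := modz_ge0 z nz; have h1 := ltz_mod z nz.
move: h0 h1; case: (z %% n%:Z)%Z => // k _ hk.
by rewrite /Zr; apply: (map_f (fun k : nat => k%:Z)); rewrite mem_iota add0n; move: hk; rewrite ltz_nat.
Qed.

Definition Ty := ((nat * (int*int*int)) * (int*int*int))%type.
Definition RL (wn : nat -> nat) (L : seq Ty) : seq (seq (int * int)) :=
  foldr (fun z acc => allpairs cons (allpairs pair (Zr z.1.1) (Zr (wn z.1.1))) acc) [:: [::]] L.
Lemma size_RL wn L : size (RL wn L) = \prod_(z <- L) (z.1.1 * wn z.1.1)%N.
Proof.
elim: L => [|z L IH]; first by rewrite big_nil.
by rewrite big_cons /= !size_allpairs IH /Zr !size_map !size_iota.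
Qed.
Lemma mem_RL wn L (f : Ty -> int * int) :
  (forall z, z \in L -> f z \in allpairs pair (Zr z.1.1) (Zr (wn z.1.1))) ->
  map f L \in RL wn L.
Proof.
elim: L => [|z L IH] H /=; first by rewrite mem_seq1.
apply: allpairs_f; first by apply: H; rewrite mem_head.
by apply: IH => z' hz'; apply: H; rewrite in_cons hz' orbT.
Qed.

Definition Vy (N : nat) : seq int := [seq k%:Z - N%:Z | k <- iota 0 (2 * N).+1].
Lemma mem_Vy N (v : int) : `|v| <= N%:Z -> v \in Vy N.
Proof.
move=> hv; have hk : 0 <= v + N%:Z by move: hv; rewrite ler_norml; lia.
move: hk hv; case e: (v + N%:Z) => [k|//] _ hv.
have -> : v = k%:Z - N%:Z by rewrite -e; ring.
rewrite /Vy; apply: (map_f (fun k : nat => k%:Z - N%:Z)); rewrite mem_iota add0n ltnS.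
have : v + N%:Z <= 2 * N%:Z by move: hv; rewrite ler_norml; lia.
rewrite e; lia.
Qed.
Definition o0 : 'I_3 := @Ordinal 3 0 isT.
Definition o1 : 'I_3 := @Ordinal 3 1 isT.
Definition o2 : 'I_3 := @Ordinal 3 2 isT.

Lemma pigeon (H N : nat) (yp : int*int*int) (wn : nat -> nat) (L : seq Ty) :
  (forall z, z \in L -> (0 < z.1.1)%N /\ (0 < wn z.1.1)%N) ->
  ((`|yp.1.1| + `|yp.1.2| + `|yp.2|) * H <= N)%N ->
  ((2 * N).+1 * \prod_(z <- L) (z.1.1 * wn z.1.1) < H.+1 ^ 3)%N ->
  exists x0 x1 x2 : int, [|| x0 != 0, x1 != 0 | x2 != 0] /\
    `|x0| <= H%:Z /\ `|x1| <= H%:Z /\ `|x2| <= H%:Z /\ dot3 yp x0 x1 x2 = 0 /\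
    forall z, z \in L -> (z.1.1%:Z %| dot3 z.1.2 x0 x1 x2)%Z /\
                         ((wn z.1.1)%:Z %| dot3 z.2 x0 x1 x2)%Z.
Proof.
move=> hL hN hcard.
pose cz (f : {ffun 'I_3 -> 'I_H.+1}) (i : 'I_3) : int := (f i : nat)%:Z.
pose vf (f : {ffun 'I_3 -> 'I_H.+1}) :=
  (dot3 yp (cz f o0) (cz f o1) (cz f o2),
   [seq ((dot3 z.1.2 (cz f o0) (cz f o1) (cz f o2) %% z.1.1%:Z)%Z,
         (dot3 z.2 (cz f o0) (cz f o1) (cz f o2) %% (wn z.1.1)%:Z)%Z) | z <- L]).
have czb f i : 0 <= cz f i <= H%:Z.
  by rewrite /cz; have := ltn_ord (f i); lia.
have inR f : vf f \in allpairs pair (Vy N) (RL wn L).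
  apply: allpairs_f.
    apply: mem_Vy; rewrite /dot3.
    have h0 := czb f o0; have h1 := czb f o1; have h2 := czb f o2.
    move: h0 h1 h2 hN; set x0 := cz f o0; set x1 := cz f o1; set x2 := cz f o2.
    move=> h0 h1 h2 hN; set a := yp.1.1 in hN *; set b := yp.1.2 in hN *; set c := yp.2 in hN *.
    have e0 : `|a * x0| <= `|a| * H%:Z.
      by rewrite normrM ler_wpM2l // ger0_norm; lia.
    have e1 : `|b * x1| <= `|b| * H%:Z.
      by rewrite normrM ler_wpM2l // ger0_norm; lia.
    have e2 : `|c * x2| <= `|c| * H%:Z.
      by rewrite normrM ler_wpM2l // ger0_norm; lia.
    have := ler_normD (a * x0 + b * x1) (c * x2).
    have := ler_normD (a * x0) (b * x1).
    nia.
  apply: mem_RL => z hz; have [z0 w0] := hL z hz.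
  by apply: allpairs_f; apply: mem_Zr.
have : ~~ injectiveb vf.
  apply/negP => /injectiveP inj.
  have u : uniq (map vf (enum {ffun 'I_3 -> 'I_H.+1})) by rewrite map_inj_uniq // enum_uniq.
  have sub : {subset map vf (enum {ffun 'I_3 -> 'I_H.+1}) <= allpairs pair (Vy N) (RL wn L)}.
    by move=> v /mapP [f _ ->].
  have := uniq_leq_size u sub.
  rewrite size_map -cardE card_ffun !card_ord size_allpairs size_RL /Vy size_map size_iota.
  by rewrite leqNgt hcard.
case/injectivePn => f1 [f2 nf vfe].
exists (cz f1 o0 - cz f2 o0), (cz f1 o1 - cz f2 o1), (cz f1 o2 - cz f2 o2).
have lin l f g : dot3 l (cz f o0 - cz g o0) (cz f o1 - cz g o1) (cz f o2 - cz g o2)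
   = dot3 l (cz f o0) (cz f o1) (cz f o2) - dot3 l (cz g o0) (cz g o1) (cz g o2).
  by rewrite /dot3; ring.
have b0 := czb f1 o0; have b1 := czb f1 o1; have b2 := czb f1 o2.
have c0 := czb f2 o0; have c1 := czb f2 o1; have c2 := czb f2 o2.
case: vfe => e1 e2.
split.
  case: (boolP [|| _ , _ | _]) => // hz; exfalso; move: hz.
  rewrite !negb_or !negbK => /and3P [/eqP d0 /eqP d1 /eqP d2].
  move/eqP: nf; apply; apply/ffunP => i; apply/val_inj.
  have : i = o0 \/ i = o1 \/ i = o2.
    case: i => [[|[|[|//]]] ?]; [left|right;left|right;right]; exact/val_inj.
  move=> [->|[->|->]].
  - by move/eqP: d0; rewrite subr_eq0 eqz_nat => /eqP.
  - by move/eqP: d1; rewrite subr_eq0 eqz_nat => /eqP.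
  - by move/eqP: d2; rewrite subr_eq0 eqz_nat => /eqP.
do 3! (split; first lia).
split; first by rewrite lin e1 subrr.
move=> z hz; have := (eq_in_map _ _ _).2 e2 z hz; case=> m1 m2.
rewrite !lin; split; rewrite -eqz_mod_dvd; apply/eqP; [exact: m1|exact: m2].
Qed.

Local Open Scope ring_scope.
Definition c3 (x : 'cV[int]_3) (i : nat) := x (inord i) 0.
Lemma c3E (x : 'cV[int]_3) a b : x a b = c3 x a.
Proof. by rewrite /c3 !inord_val ord1. Qed.
Lemma qformE M x : qform M x = Qp M (c3 x 0) (c3 x 1) (c3 x 2).
Proof.
have -> : qform M x = \sum_(i < 3) \sum_(j < 3) c3 x i * e3 M i j * c3 x j.
  rewrite /qform !mxE exchange_big /=; apply: eq_bigr => j _.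
  rewrite !mxE big_distrl /=; apply: eq_bigr => i _.
  by rewrite !mxE !c3E e3E.
rewrite !big_ord_recl !big_ord0 /Qp /=; ring.
Qed.

Lemma choose_list (s : seq nat)
  (P : nat -> int * int * int -> int * int * int -> Prop) :
  (forall p, p \in s -> exists l1 l2, P p l1 l2) ->
  exists L : seq Ty, map (fun z : Ty => z.1.1) L = s /\ forall z, z \in L -> P z.1.1 z.1.2 z.2.
Proof.
elim: s => [|p s IH] H; first by exists [::].
have [l1 [l2 h]] := H p (mem_head _ _).
have [L [e HL]] : exists L : seq Ty, map (fun z : Ty => z.1.1) L = s /\ forall z, z \in L -> P z.1.1 z.1.2 z.2.
  by apply: IH => p' hp'; apply: H; rewrite in_cons hp' orbT.
exists (((p, l1), l2) :: L); split; first by rewrite /= e.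
by move=> z; rewrite in_cons => /orP [/eqP -> //|]; apply: HL.
Qed.

Definition col3 (a b c : int) : 'cV[int]_3 :=
  \col_(i < 3) (if (i : nat) == 0%N then a else if (i : nat) == 1%N then b else c).
Lemma col3E a b c : [/\ c3 (col3 a b c) 0 = a, c3 (col3 a b c) 1 = b & c3 (col3 a b c) 2 = c].
Proof. by rewrite /c3 !mxE !inordK. Qed.

Lemma Qp_opp (A : 'M[int]_3) a0 a1 a2 : Qp (- A) a0 a1 a2 = - Qp A a0 a1 a2.
Proof. rewrite /Qp /e3 !mxE; ring. Qed.

Lemma sqnormE x : sqnorm x = c3 x 0 ^+ 2 + c3 x 1 ^+ 2 + c3 x 2 ^+ 2.
Proof. by rewrite /sqnorm !big_ord_recl big_ord0 /= !c3E addr0 addrA. Qed.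

Lemma aux_pg (p g : nat) : (1 < p)%N -> (0 < g)%N -> (p * g <= g)%N -> False.
Proof. nia. Qed.

Local Close Scope ring_scope.
Lemma aux_H (H N0 : nat) : (0 < N0)%N -> (N0 <= H * H)%N ->
  (forall n, (N0 <= n * n)%N -> (H <= n)%N) -> (H * H <= 4 * N0)%N.
Proof.
move=> N1 hH hmin; case: H hH hmin => [|h] hH hmin; first by lia.
case: (leqP N0 (h * h)) => hh; first by have := hmin h hh; lia.
case: h hH hmin hh => [|h] hH hmin hh; first by lia.
have e : (h.+2 * h.+2 <= (2 * h.+1) * (2 * h.+1))%N by apply: leq_mul; lia.
have e2 : ((2 * h.+1) * (2 * h.+1) = 4 * (h.+1 * h.+1))%N by rewrite mulnACA.
lia.
Qed.

Lemma aux_card (S S' g q H W : nat) : S = (S' * g)%N -> (g <= S)%N -> (W <= g)%N -> (0 < q)%N ->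
  (3 * S * q <= H * H)%N -> (1 <= H)%N -> ((2 * (S' * H)).+1 * (q * W) < H.+1 ^ 3)%N.
Proof.
move=> eS gS Wg q0 hH H1.
have s1 : ((2 * (S' * H)).+1 * (q * W) <= (2 * (S' * H)).+1 * (q * g))%N.
  by apply: leq_mul => //; apply: leq_mul.
have E : ((2 * (S' * H)).+1 * (q * g) = 2 * (S * q * H) + q * g)%N by rewrite eS; ring.
have F1 : (q * g <= S * q * H)%N.
  apply: (leq_trans (leq_mul (leqnn q) gS)); rewrite mulnC -{1}(muln1 (S * q)).
  exact: leq_mul.
have s2 : ((2 * (S' * H)).+1 * (q * g) <= 3 * S * q * H)%N.
  rewrite E -!mulnA; move: F1; rewrite -!mulnA; lia.
have s3 : (3 * S * q * H <= H * H * H)%N by apply: leq_mul.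
have s4 : (H * H * H < H.+1 ^ 3)%N.
  by rewrite expnS expnS expn1 mulnC; apply: ltn_mul => //; apply: ltn_mul.
lia.
Qed.

Local Open Scope ring_scope.
Lemma aux_sq (x0 x1 x2 : int) (H S q : nat) : `|x0| <= H%:Z -> `|x1| <= H%:Z -> `|x2| <= H%:Z ->
  (H * H <= 4 * (3 * S * q))%N -> x0^+2 + x1^+2 + x2^+2 <= 36 * (S * q)%:Z.
Proof.
move=> h0 h1 h2 hH.
have s k : `|k| <= H%:Z -> k ^+ 2 <= (H * H)%:Z.
  move=> hk; rewrite -real_normK ?num_real // PoszM expr2.
  by apply: ler_pM => //.
have := s _ h0; have := s _ h1; have := s _ h2.
move: hH; rewrite -lez_nat => hH. lia.
Qed.

Lemma main_int (M : 'M[int]_3) (q : nat) (y : 'cV[int]_3) (t : int) :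
  squarefree q -> M^T = M -> y != 0 -> (q%:Z %| qform (- \adj M) y - t^+2)%Z ->
  exists x : 'cV[int]_3, x != 0 /\ (q%:Z %| qform M x)%Z /\
    sqnorm x <= 36 * ((`|c3 y 0| + `|c3 y 1| + `|c3 y 2|)%N * q)%:Z.
Proof.
move=> sf hM y0n hq.
have q0 : (0 < q)%N.
  case: q sf {hq} => // sf; by have := sf 2%N isT.
set y0 := c3 y 0; set y1 := c3 y 1; set y2 := c3 y 2.
have ny : [|| y0 != 0, y1 != 0 | y2 != 0].
  case: (boolP [|| _ , _ | _]) => // hz; exfalso; move: hz.
  rewrite !negb_or !negbK => /and3P [/eqP d0 /eqP d1 /eqP d2].
  move/eqP: y0n; apply; apply/matrixP => i j; rewrite c3E !mxE.
  by case: i => [[|[|[|//]]] ?] /=.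
pose g := gcdn `|y0| (gcdn `|y1| `|y2|).
have g0 : (0 < g)%N.
  rewrite /g !gcdn_gt0 !absz_gt0; by case/or3P: ny => ->; rewrite ?orbT.
have gd0 : (g %| `|y0|)%N by apply: dvdn_gcdl.
have gd1 : (g %| `|y1|)%N by apply: (dvdn_trans (dvdn_gcdr _ _)); apply: dvdn_gcdl.
have gd2 : (g %| `|y2|)%N by apply: (dvdn_trans (dvdn_gcdr _ _)); apply: dvdn_gcdr.
pose y0' := (y0 %/ g%:Z)%Z; pose y1' := (y1 %/ g%:Z)%Z; pose y2' := (y2 %/ g%:Z)%Z.
have e0 : y0 = y0' * g%:Z by rewrite divzK.
have e1 : y1 = y1' * g%:Z by rewrite divzK.
have e2 : y2 = y2' * g%:Z by rewrite divzK.
have hAq : Qp (\adj M) y0 y1 y2 = (g%:Z)^+2 * Qp (\adj M) y0' y1' y2'.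
  by rewrite e0 e1 e2 /Qp; ring.
rewrite qformE Qp_opp -/y0 -/y1 -/y2 hAq in hq.
have prim : forall p, prime p -> ~~ [&& (p%:Z %| y0')%Z, (p%:Z %| y1')%Z & (p%:Z %| y2')%Z].
  move=> p pp; apply/negP => /and3P [h0 h1 h2].
  have k (yi yi' : int) : yi = yi' * g%:Z -> (p%:Z %| yi')%Z -> (p * g %| `|yi|)%N.
    by move=> -> h; rewrite abszM; apply: dvdn_mul.
  have : (p * g %| g)%N.
    by rewrite /g !dvdn_gcd (k _ _ e0 h0) (k _ _ e1 h1) (k _ _ e2 h2).
  move/(dvdn_leq g0) => h; case: (aux_pg _ _ (prime_gt1 pp) g0 h).
pose Pp (p : nat) (l1 l2 : int * int * int) := forall x0 x1 x2 : int,
    (p%:Z %| y0'*x0 + y1'*x1 + y2'*x2)%Z -> (p%:Z %| dot3 l1 x0 x1 x2)%Z ->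
    ((if (p%:Z %| g%:Z)%Z then p%:Z else 1) %| dot3 l2 x0 x1 x2)%Z ->
    (p%:Z %| Qp M x0 x1 x2)%Z.
have data : forall p, p \in primes q -> exists l1 l2, Pp p l1 l2.
  move=> p; rewrite mem_primes => /and3P [pp _ pq].
  apply: (perprime M p y0' y1' y2' g%:Z t pp hM (prim p pp)).
  have : (p%:Z %| q%:Z)%Z by rewrite dvdzE.
  move/dvdz_trans => /(_ _ hq).
  have -> : - ((g%:Z) ^+ 2 * Qp (\adj M) y0' y1' y2') - t ^+ 2
         = - ((g%:Z) ^+ 2 * Qp (\adj M) y0' y1' y2' + t ^+ 2) by ring.
  by rewrite rpredN.
have [L [eL HL]] := choose_list (primes q) Pp data.
pose S := (`|y0| + `|y1| + `|y2|)%N.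
pose S' := (`|y0'| + `|y1'| + `|y2'|)%N.
have eS : S = (S' * g)%N by rewrite /S /S' e0 e1 e2 !abszM /= !mulnDl.
have S1 : (0 < S)%N.
  by rewrite /S !addn_gt0 !absz_gt0 -orbA.
have gS : (g <= S)%N.
  have : (0 < S')%N by move: S1; rewrite eS muln_gt0 => /andP [].
  by rewrite eS; case: (S') => // s' _; rewrite mulSn leq_addr.
pose N0 := (3 * S * q)%N.
have N01 : (0 < N0)%N by rewrite /N0 !muln_gt0 S1 q0.
have exH : exists n, (N0 <= n * n)%N by exists N0; rewrite leq_pmulr.
case: (ex_minnP exH) => H hH hmin.
have HH := aux_H _ _ N01 hH hmin.
have H1 : (1 <= H)%N by case: H hH {hmin HH} => //; rewrite muln0 leqNgt N01.
pose wn (p : nat) := if (p%:Z %| g%:Z)%Z then p else 1%N.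
have Wg : ((\prod_(z <- L) wn z.1.1)%N %| g)%N.
  have -> : (\prod_(z <- L) wn z.1.1)%N = (\prod_(p <- [seq p <- primes q | (p%:Z %| g%:Z)%Z]) p)%N.
    by rewrite big_filter [RHS]big_mkcond -eL big_map.
  apply: prod_primes_dvd; first by rewrite filter_uniq // primes_uniq.
  move=> p; rewrite mem_filter mem_primes => /andP [pg /and3P [pp _ _]]; split => //.
have Pq : (\prod_(z <- L) z.1.1)%N = q.
  by rewrite -[in RHS](squarefree_prod q q0 sf) -eL big_map.
have card : ((2 * (S' * H)).+1 * \prod_(z <- L) (z.1.1 * wn z.1.1) < H.+1 ^ 3)%N.
  rewrite big_split /= Pq; apply: (aux_card S S' g q H _ eS gS _ q0 hH H1).
  exact: (dvdn_leq g0 Wg).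
have hL : forall z, z \in L -> (0 < z.1.1)%N /\ (0 < wn z.1.1)%N.
  move=> z hz; have : z.1.1 \in primes q by rewrite -eL; apply: map_f.
  rewrite mem_primes => /and3P [pp _ _]; rewrite /wn prime_gt0 //; split => //.
  by case: ifP => // _; rewrite prime_gt0.
have [x0 [x1 [x2 [nx [bx0 [bx1 [bx2 [dx hx]]]]]]]] :=
  pigeon H (S' * H) (y0', y1', y2') wn L hL (leqnn _) card.
exists (col3 x0 x1 x2); have [c0 c1 c2] := col3E x0 x1 x2.
split.
  apply/eqP => h0.
  by case/or3P: nx => /negP; apply; [rewrite -c0|rewrite -c1|rewrite -c2]; rewrite h0 /c3 mxE.
split; last first.
  rewrite sqnormE c0 c1 c2; exact: (aux_sq _ _ _ H S q bx0 bx1 bx2 HH).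
rewrite qformE c0 c1 c2 dvdzE -{1}(squarefree_prod q q0 sf).
apply: prod_primes_dvd; first exact: primes_uniq.
move=> p hp; split; first by move: hp; rewrite mem_primes => /andP [].
move: hp; rewrite -eL => /mapP [z hz ->].
have [hx1 hx2] := hx z hz.
apply: (HL z hz) => //.
  by move: dx; rewrite /dot3 /= => ->; apply: dvdz0.
by move: hx2; rewrite /wn; case: ifP.
Qed.

Local Open Scope ring_scope.
Local Open Scope classical_set_scope.
Lemma enormE (R : realType) x : enorm R x =
  Num.sqrt ((c3 x 0)%:~R ^+ 2 + (c3 x 1)%:~R ^+ 2 + (c3 x 2)%:~R ^+ 2 : R).
Proof. by rewrite /enorm sqnormE !intrD !rmorphXn. Qed.

Lemma normc_le (R : realType) x i : (i < 3)%N -> ((`|c3 x i|%N)%:R : R) <= enorm R x.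
Proof.
move=> hi; rewrite enormE natr_absz intr_norm -sqrtr_sqr ler_sqrt; last first.
  by rewrite !addr_ge0 // sqr_ge0.
have h0 := sqr_ge0 ((c3 x 0)%:~R : R); have h1 := sqr_ge0 ((c3 x 1)%:~R : R).
have h2 := sqr_ge0 ((c3 x 2)%:~R : R).
by case: i hi => [|[|[|//]]] _; lra.
Qed.

Lemma e0_in (N : 'M[int]_3) (q : nat) : (q%:Z %| qform N (col3 q%:Z 0 0))%Z.
Proof.
have [c0 c1 c2] := col3E q%:Z 0 0.
rewrite qformE c0 c1 c2 /Qp.
have -> : q%:Z * e3 N 0 0 * q%:Z + q%:Z * e3 N 0 1 * 0 + q%:Z * e3 N 0 2 * 0 +
  0 * e3 N 1 0 * q%:Z + 0 * e3 N 1 1 * 0 + 0 * e3 N 1 2 * 0 + 0 * e3 N 2 0 * q%:Z +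
  0 * e3 N 2 1 * 0 + 0 * e3 N 2 2 * 0 = q%:Z * (e3 N 0 0 * q%:Z) by ring.
exact: dvdz_mulr.
Qed.

Lemma e0_nz (q : nat) : (0 < q)%N -> col3 q%:Z 0 0 != 0.
Proof.
move=> q0; apply/eqP => h; have [c0 _ _] := col3E q%:Z 0 0.
by move: c0; rewrite h /c3 mxE => -[e]; rewrite -e in q0.
Qed.

Lemma e0_norm (R : realType) (q : nat) : enorm R (col3 q%:Z 0 0) = q%:R.
Proof.
have [c0 c1 c2] := col3E q%:Z 0 0.
rewrite enormE c0 c1 c2 !expr0n /= !addr0 sqrtr_sqr ger0_norm //.
Qed.

Lemma sq0 (q : nat) : squarefree q -> (0 < q)%N.
Proof. by case: q => // sf; have := sf 2%N isT. Qed.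

Lemma mQ_bound (R : realType) (M : 'M[int]_3) (q : nat) : squarefree q -> M^T = M ->
  mQ R M q <= 11 * Num.sqrt (q%:R) * Num.sqrt (mhatQ R (- \adj M) q).
Proof.
move=> sf hM; have q0 := sq0 _ sf.
pose A := [set x : 'cV[int]_3 | x != 0 /\ (q%:Z %| qform M x)%Z].
pose B := [set x : 'cV[int]_3 | x != 0 /\ exists t : int, (q%:Z %| qform (- \adj M) x - t ^+ 2)%Z].
have eA : mQ R M q = inf [set enorm R x | x in A] by [].
have eB : mhatQ R (- \adj M) q = inf [set enorm R x | x in B] by [].
have hlbA : has_lbound [set enorm R x | x in A].
  by exists 0 => r [x _ <-]; apply: sqrtr_ge0.
have neA : [set enorm R x | x in A] !=set0.
  by exists (enorm R (col3 q%:Z 0 0)), (col3 q%:Z 0 0) => //; split; [exact: e0_nz | exact: e0_in].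
have neB : [set enorm R x | x in B] !=set0.
  exists (enorm R (col3 q%:Z 0 0)), (col3 q%:Z 0 0) => //; split; first exact: e0_nz.
  by exists 0; rewrite expr0n /= subr0; exact: e0_in.
have m0 : 0 <= mQ R M q.
  by rewrite eA; apply: lb_le_inf => // r [x _ <-]; apply: sqrtr_ge0.
have mle : forall x, A x -> mQ R M q <= enorm R x.
  by move=> x hx; rewrite eA; apply: (ge_inf hlbA); exists x.
have key : forall y, B y -> (mQ R M q) ^+ 2 / (108 * q%:R) <= enorm R y.
  move=> y [yn [t ht]].
  have [x [xn [xq xb]]] := main_int M q y t sf hM yn ht.
  have h1 := mle x (conj xn xq).
  have h2 : (mQ R M q) ^+ 2 <= (sqnorm x)%:~R.
    have sx : 0 <= ((sqnorm x)%:~R : R).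
      by rewrite ler0z sqnormE !addr_ge0 // sqr_ge0.
    rewrite -(sqr_sqrtr sx); move: h1; rewrite /enorm => h1.
    by rewrite ler_pXn2r // ?nnegrE ?sqrtr_ge0.
  have h3 : ((sqnorm x)%:~R : R) <= 36 * ((`|c3 y 0| + `|c3 y 1| + `|c3 y 2|)%N%:R * q%:R).
    move: xb; rewrite -(ler_int R) => xb; apply: (le_trans xb).
    by rewrite intrM -!pmulrn natrM.
  have h4 := normc_le R y 0 isT; have h5 := normc_le R y 1 isT; have h6 := normc_le R y 2 isT.
  have qp : 0 < (q%:R : R) by rewrite ltr0n.
  rewrite ler_pdivrMr ?mulr_gt0 ?ltr0n //.
  apply: (le_trans h2); apply: (le_trans h3); rewrite !natrD.
  nra.
have k2 : (mQ R M q) ^+ 2 / (108 * q%:R) <= mhatQ R (- \adj M) q.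
  by rewrite eB; apply: lb_le_inf => // r [y hy <-]; apply: key.
have mh0 : 0 <= mhatQ R (- \adj M) q.
  by rewrite eB; apply: lb_le_inf => // r [x _ <-]; apply: sqrtr_ge0.
have qp : 0 < (q%:R : R) by rewrite ltr0n.
have k3 : (mQ R M q) ^+ 2 <= 108 * q%:R * mhatQ R (- \adj M) q.
  by move: k2; rewrite ler_pdivrMr ?mulr_gt0 ?ltr0n // mulrC.
have s108 : Num.sqrt (108 : R) <= 11.
  rewrite -(ger0_norm (_ : (0 : R) <= 11)) // -sqrtr_sqr ler_sqrt //; lra.
rewrite -(ger0_norm m0) -sqrtr_sqr.
apply: (le_trans (_ : _ <= Num.sqrt (108 * q%:R * mhatQ R (- \adj M) q))).
  by rewrite ler_sqrt // !mulr_ge0 // ltW.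
rewrite !sqrtrM ?mulr_ge0 ?ler0n //.
by rewrite ler_wpM2r ?sqrtr_ge0 // ler_wpM2r ?sqrtr_ge0.
Qed.

Definition d3 (M : 'M[int]_3) := e3 M 0 0 * (e3 M 1 1 * e3 M 2 2 - e3 M 1 2 * e3 M 2 1)
  - e3 M 0 1 * (e3 M 1 0 * e3 M 2 2 - e3 M 1 2 * e3 M 2 0)
  + e3 M 0 2 * (e3 M 1 0 * e3 M 2 1 - e3 M 1 1 * e3 M 2 0).
Lemma det3 (M : 'M[int]_3) : \det M = d3 M.
Proof.
rewrite (expand_det_row _ ord0) !big_ord_recl big_ord0 /cofactor.
rewrite !(expand_det_row _ ord0) !big_ord_recl !big_ord0 /cofactor.
rewrite !det_mx11 !mxE !e3E /= /d3. ring.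
Qed.

Lemma det_negadj (M : 'M[int]_3) : \det (- \adj M) = - (\det M) ^+ 2.
Proof.
rewrite !det3 /d3.
have eN i j : e3 (- \adj M) i j = - e3 (\adj M) i j by rewrite /e3 mxE.
rewrite !eN !adj3 //= /bb /=; ring.
Qed.

Lemma negadj_adm (M : 'M[int]_3) (q : nat) : admissible M q -> admissible (- \adj M) q.
Proof.
case=> hM cop; split.
  have e : (\adj M)^T = \adj M by rewrite trmx_adj hM.
  by rewrite (raddfN (@trmx int 3 3)); congr (- _); exact: e.
by rewrite det_negadj abszN expr2 abszM coprimeMl cop.
Qed.

Lemma mhat_le_q (R : realType) (N : 'M[int]_3) (q : nat) : (0 < q)%N -> mhatQ R N q <= q%:R.
Proof.
move=> q0.
rewrite /mhatQ -(e0_norm R q); apply: ge_inf.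
  by exists 0 => r [x _ <-]; apply: sqrtr_ge0.
exists (col3 q%:Z 0 0) => //; split.
  exact: e0_nz.
by exists 0; rewrite expr0n /= subr0; exact: e0_in.
Qed.

Local Close Scope classical_set_scope.
Theorem lemma1 (R : realType) :
  exists C : R, 0 < C /\
    (forall (q : nat) (M : 'M[int]_3),
        odd q -> squarefree q -> admissible M q ->
        mQ R M q <= C * Num.sqrt (q%:R) * Num.sqrt (mhatQ R (- \adj M) q)) /\
    (forall q : nat, odd q -> squarefree q ->
        B3star R q <= C * Num.sqrt (q%:R) * Num.sqrt (B3hat R q)).
Proof.
exists 11; split; first by [].
split.
  by move=> q M _ sf [hM _]; apply: mQ_bound.
move=> q _ sf; have q0 := sq0 _ sf.
have adm1 : admissible 1%:M q by split; [exact: trmx1 | rewrite det1 /= coprime1n].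
have hub : has_ubound [set mhatQ R M q | M in [set M : 'M[int]_3 | admissible M q]].
  by exists q%:R => r [M _ <-]; apply: mhat_le_q.
rewrite /B3star; apply: ge_sup.
  by exists (mQ R 1%:M q), 1%:M.
move=> r [M adm <-].
apply: (le_trans (mQ_bound R M q sf adm.1)).
rewrite ler_wpM2l ?mulr_ge0 ?sqrtr_ge0 //.
rewrite ler_sqrt; last first.
  apply: (le_trans (_ : 0 <= mhatQ R (- \adj M) q)); last first.
    by apply: (ub_le_sup hub); exists (- \adj M) => //; apply: negadj_adm.
  rewrite /mhatQ; apply: lb_le_inf.
    exists (enorm R (col3 q%:Z 0 0)), (col3 q%:Z 0 0) => //; split; first exact: e0_nz.
    by exists 0; rewrite expr0n /= subr0; exact: e0_in.
  by move=> s [x _ <-]; apply: sqrtr_ge0.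
by apply: (ub_le_sup hub); exists (- \adj M) => //; apply: negadj_adm.
Qed.
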